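(* Let $q$ be a prime power with $q-1=ds$, $d,s$ positive integers, let $r$ be an integer with $1\le r<s$, let $h(x)\in\mathbb{F}_q[x]$, let $\xi$ be a primitive element of $\mathbb{F}_q$ and $\omega=\xi^s$. If $f(x)=x^rh(x^s)$ is a permutation polynomial of $\mathbb{F}_q$, then its inverse over $\mathbb{F}_q$ is given by $$f^{-1}(x)=\frac1d\sum_{i=0}^{d-1}\sum_{j=0}^{d-1}\omega^{i(t-jr)}\left(\frac{x}{h(\omega^i)}\right)^{\tilde r+js},$$ where $\tilde r,t\in\mathbb{Z}$ satisfy $1\le\tilde r<s$ and $r\tilde r+st=1$.
   Context: A polynomial $f\in\mathbb{F}_q[x]$ is a permutation polynomial of $\mathbb{F}_q$ if it induces a bijection of $\mathbb{F}_q$. A polynomial $g$ is the inverse of $f$ over $\mathbb{F}_q$ if $g(f(c))=c$ for all $c\in\mathbb{F}_q$. Since $d\mid q-1$, $1/d$ makes sense in $\mathbb{F}_q$. *)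

(* Defs.v *)
From HB Require Import structures.
From mathcomp Require Import all_boot all_order all_algebra all_field.
Set Implicit Arguments. Unset Strict Implicit. Unset Printing Implicit Defensive.
Import GRing.Theory.
Local Open Scope ring_scope.

Definition perm_poly (F : finFieldType) (f : {poly F}) : Prop :=
  bijective (fun c : F => f.[c]).

(* Main.v *)
Require Import Defs.
From HB Require Import structures.
From mathcomp Require Import all_boot all_order all_algebra all_field all_fingroup all_solvable.
From mathcomp Require Import ring zify.
Import GRing.Theory.
Local Open Scope ring_scope.
Lemma term_eq (F:fieldType) (w y : F) (t:int) (j r s rt : nat) : w != 0 ->
  w ^ (t - (j*r)%:Z) * y ^+ (rt + j*s) = (w ^ t * y ^+ rt) * (y ^+ s / w ^+ r) ^+ j.
Proof.
move=> w0; rewrite expfzDr // -exprz_inv.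
change ((w ^-1) ^ ((j*r)%N)%:Z) with ((w ^-1) ^+ (j*r)).
rewrite exprD exprMn exprVn -!exprM exprVn -exprM (mulnC s j) (mulnC r j).
ring.
Qed.
Lemma natR0 (F : finFieldType) : (#|F|%:R : F) = 0.
Proof.
by rewrite -FinRing.zmodXgE -cardsT expg_cardG // inE.
Qed.
Lemma aux (F:fieldType) (w y : F) (t : int) (r s rt : nat) : w != 0 -> y != 0 ->
  y ^+ s = w ^+ r -> r%:Z * rt%:Z + s%:Z * t = 1 ->
  (w ^ t * y ^+ rt) ^+ r = y /\ (w ^ t * y ^+ rt) ^+ s = w.
Proof.
move=> w0 y0 yw e.
have E : forall (a : F) n, a ^+ n = a ^ (n%:Z) by [].
split.
- rewrite (E (w ^ t * y ^+ rt) r) expfzMl exprzAC -(E w r) -yw (E y s) (E y rt) !exprz_exp -expfzDr //.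
  by rewrite addrC (mulrC rt%:Z) e expr1z.
- rewrite (E (w ^ t * y ^+ rt) s) expfzMl (E y rt) !exprz_exp (mulrC rt%:Z) -exprz_exp.
  rewrite -exprz_exp -(E y s) yw (E w r) !exprz_exp -expfzDr // addrC (mulrC t) e expr1z //.
Qed.

Lemma aux2 (F:fieldType) (c : F) (t : int) (r s rt : nat) : c != 0 ->
  r%:Z * rt%:Z + s%:Z * t = 1 -> (c ^+ s) ^ t * (c ^+ r) ^+ rt = c.
Proof.
move=> c0 e.
have E : forall (a : F) n, a ^+ n = a ^ (n%:Z) by [].
rewrite -exprM (E c (r * rt)%N) (E c s) exprz_exp PoszM -expfzDr // addrC e expr1z //.
Qed.

Theorem corollary4p5 (F : finFieldType) (q d s r : nat) (h : {poly F}) (xi : F)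
  (rt : nat) (t : int) :
  #|F| = q -> q.-1 = (d * s)%N -> (0 < d)%N -> (0 < s)%N ->
  (1 <= r)%N -> (r < s)%N ->
  (q.-1).-primitive_root xi ->
  perm_poly ('X^r * (h \Po 'X^s)) ->
  (1 <= rt)%N -> (rt < s)%N -> (r%:Z * rt%:Z + s%:Z * t = 1)%R ->
  let omega := xi ^+ s in
  forall c : F,
    let x := ('X^r * (h \Po 'X^s)).[c] in
    (d%:R)^-1 * (\sum_(i < d) \sum_(j < d)
        omega ^ (i%:Z * (t - (j * r)%:Z)) * (x / h.[omega ^+ i]) ^+ (rt + j * s))
    = c.
Proof.
move=> Fq qd d0 s0 r1 rs xip fperm rt1 rts rtt omega c x.
have fE : forall a, ('X^r * (h \Po 'X^s)).[a] = a ^+ r * h.[a ^+ s].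
  by move=> a; rewrite hornerM hornerXn horner_comp hornerXn.
have finj := bij_inj fperm.
have q0 : (0 < q)%N by rewrite -Fq; apply/card_gt0P; exists 0.
have unit1 : forall a : F, a != 0 -> a ^+ (d * s) = 1.
  move=> a a0; apply: (mulfI a0); rewrite mulr1 -exprS -qd prednK // -Fq.
  exact: expf_card.
have pw : d.-primitive_root omega.
  by have := exp_prim_root xip s; rewrite qd gcdnMl mulnK.
have od : omega ^+ d = 1 by apply: prim_expr_order.
have om0 : omega != 0.
  by apply/eqP=> o0; move: od; rewrite o0 expr0n gtn_eqF // => /eqP; rewrite eq_sym oner_eq0.
have dR : d%:R != 0 :> F.
  apply/eqP=> dR0.
  have : (q%:R : F) = 0 by rewrite -Fq natR0.
  rewrite -(prednK q0) -addn1 natrD qd natrM dR0 mul0r add0r => /eqP.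
  by rewrite oner_eq0.
have rn0 : (r == 0)%N = false by rewrite eqn0Ngt r1.
have rtn0 : (rt == 0)%N = false by rewrite eqn0Ngt rt1.
have [c0|c0] := eqVneq c 0.
  have x0 : x = 0 by rewrite /x fE c0 expr0n rn0 mul0r.
  rewrite big1 ?mulr0 // => i _; rewrite big1 // => j _.
  by rewrite x0 mul0r expr0n addn_eq0 rtn0 /= mulr0.
have x0 : x != 0.
  apply/eqP=> x0; move: c0; rewrite -(finj c 0) ?eqxx //=.
  by rewrite -/x x0 fE expr0n rn0 mul0r.
have claim : forall i : 'I_d, \sum_(j < d)
        omega ^ (i%:Z * (t - (j * r)%:Z)) * (x / h.[omega ^+ i]) ^+ (rt + j * s)
     = if c ^+ s == omega ^+ i then d%:R * c else 0.
  move=> i.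
  set w := omega ^+ i; set y := x / h.[w]; set z := y ^+ s / w ^+ r.
  have w0 : w != 0 by rewrite expf_neq0.
  have E : forall j : 'I_d, omega ^ (i%:Z * (t - (j * r)%:Z)) * y ^+ (rt + j * s)
      = (w ^ t * y ^+ rt) * z ^+ j.
    by move=> j; rewrite -exprz_exp; apply: term_eq.
  rewrite (eq_bigr _ (fun j _ => E j)) -mulr_sumr.
  have [cw|cw] := eqVneq (c ^+ s) w.
    have hw0 : h.[w] != 0.
      by apply: contra x0 => /eqP hw; rewrite /x fE cw hw mulr0.
    have yE : y = c ^+ r by rewrite /y /x fE cw mulfK.
    have z1 : z = 1.
      by rewrite /z yE -cw -!exprM mulnC divff // expf_neq0.
    rewrite z1 (eq_bigr (fun _ => 1)); last by move=> j _; rewrite expr1n.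
    by rewrite sumr_const card_ord -cw yE aux2 // mulrC.
  have [y0|y0] := eqVneq y 0.
    by rewrite y0 expr0n rtn0 mulr0 mul0r.
  have hw0 : h.[w] != 0.
    by apply: contra y0 => /eqP hw; rewrite /y hw invr0 mulr0.
  have zd : z ^+ d = 1.
    rewrite /z exprMn exprVn -!exprM (mulnC s) unit1 // mulnC -mulnA exprM.
    rewrite -!exprM (_ : (i * (r * d * s) = d * s * (i * r))%N); last by lia.
    by rewrite exprM -qd (prim_expr_order xip) expr1n div1r invr1.
  have [z1|z1] := eqVneq z 1.
    have yw : y ^+ s = w ^+ r.
      by move: z1; rewrite /z => /divr1_eq.
    have [A B] := @aux _ w y t r s rt w0 y0 yw rtt.
    have : ('X^r * (h \Po 'X^s)).[w ^ t * y ^+ rt] = ('X^r * (h \Po 'X^s)).[c].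
      by rewrite fE A B -/x /y divfK.
    by move/finj => cE; move: cw; rewrite -cE B eqxx.
  have : (z - 1) * (\sum_(j < d) z ^+ j) = 0 by rewrite -subrX1 zd subrr.
  by move/eqP; rewrite mulf_eq0 subr_eq0 (negbTE z1) /= => /eqP ->; rewrite mulr0.
have [k Hk] : {k : 'I_d | c ^+ s = omega ^+ k}.
  by apply: (prim_rootP pw); rewrite -exprM mulnC unit1.
rewrite (eq_bigr _ (fun i _ => claim i)) (bigD1 k) //= Hk eqxx big1 ?addr0 ?mulKf //.
move=> i ik; rewrite (eq_prim_root_expr pw) !modn_small //.
by rewrite ifN // eq_sym.
Qed.
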